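(* Let $s,r\ge 0$ be real numbers, not both zero, and put $\gamma_1(s)=(0,2s,0)$, $\gamma_2(r)=(2r,0,0)\in\mathbb{R}^3$ and $D=\sqrt{r^2+s^2}$. Let $x=(x_1,x_2,x_3)$ and $y=(y_1,y_2,y_3)$ be points of $\mathbb{R}^3$ satisfying \[ \sqrt{(x_1-2r)^2+x_2^2+x_3^2}+\sqrt{x_1^2+(x_2-2s)^2+x_3^2}=\sqrt{(y_1-2r)^2+y_2^2+y_3^2}+\sqrt{y_1^2+(y_2-2s)^2+y_3^2}, \] \[ \frac{x_1-2r}{\sqrt{(x_1-2r)^2+x_2^2+x_3^2}}=\frac{y_1-2r}{\sqrt{(y_1-2r)^2+y_2^2+y_3^2}},\qquad \frac{x_2-2s}{\sqrt{x_1^2+(x_2-2s)^2+x_3^2}}=\frac{y_2-2s}{\sqrt{y_1^2+(y_2-2s)^2+y_3^2}}. \] Define $\rho\ge 0$ by $\cosh\rho=\dfrac{|x-\gamma_1(s)|+|x-\gamma_2(r)|}{2D}$ (the prolate spheroidal ''radial'' coordinate of $x$ with respect to the foci $\gamma_1(s),\gamma_2(r)$; by the first equation it is the same for $y$). If $\rho>\ln 6$, then either $x=y$ or $x=(y_1,y_2,-y_3)$.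
   Context: This is the setting of multistatic SAR with transmitters on the line $\gamma_1$ and receivers on the perpendicular line $\gamma_2$ in the plane $x_3=0$. The three equations express that the scene points $x$ and $y$ give the same travel time $|\gamma_1(s)-\cdot|+|\cdot-\gamma_2(r)|$ and the same derivatives of this travel time with respect to $s$ and $r$, i.e. they are the conditions for two points of the canonical relation of the forward scattering operator (phase $\omega(t-(|\gamma_1(s)-x|+|x-\gamma_2(r)|)/c_0)$) to project to the same point of the data cotangent space. The conclusion says the only possible artefact is the mirror image across the plane $x_3=0$. *)

(* Defs.v *)
From Stdlib Require Export Reals.
Open Scope R_scope.

Definition dist3 (a1 a2 a3 b1 b2 b3 : R) : R :=
  sqrt ((a1 - b1)^2 + (a2 - b2)^2 + (a3 - b3)^2).

(* Main.v *)
Require Import Defs.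
From Stdlib Require Import Reals Lra Psatz.
Open Scope R_scope.

Lemma cosh_big (rho : R) : ln 6 < rho -> 3 < cosh rho.
Proof.
  intros H. unfold cosh.
  assert (Ht : 6 < exp rho).
  { rewrite <- (exp_ln 6) by lra. apply exp_increasing; auto. }
  assert (He : exp (- rho) = / exp rho) by apply exp_Ropp.
  rewrite He.
  set (t := exp rho) in *.
  assert (0 < / t) by (apply Rinv_0_lt_compat; lra).
  lra.
Qed.

Lemma sq_sqrt3 (a b c : R) : sqrt (a^2 + b^2 + c^2) ^ 2 = a^2 + b^2 + c^2.
Proof.
  rewrite pow2_sqrt; [reflexivity| nra].
Qed.

Lemma sq3_0 (u v w : R) : 0 = u^2 + v^2 + w^2 -> u = 0 /\ v = 0 /\ w = 0.
Proof.
  intros H. assert (0 <= u^2) by apply pow2_ge_0.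
  assert (0 <= v^2) by apply pow2_ge_0. assert (0 <= w^2) by apply pow2_ge_0.
  repeat split; (apply Rsqr_0_uniq; unfold Rsqr; simpl in *; lra).
Qed.

Lemma sq_eq2 (x D : R) : 0 <= x -> 0 <= D -> x^2 = 4 * D^2 -> x = 2*D.
Proof.
  intros H1 H2 H3.
  assert (E : (x - 2*D) * (x + 2*D) = 0) by nra.
  destruct (Rmult_integral _ _ E); lra.
Qed.

Lemma coef_bound (u v w a c : R) : 0 < a -> u = c*a -> a^2 = u^2 + v^2 + w^2 -> -1 <= c.
Proof.
  intros Ha Hu H. destruct (Rle_lt_dec (-1) c) as [|L]; [assumption|exfalso].
  assert (0 <= v^2) by apply pow2_ge_0. assert (0 <= w^2) by apply pow2_ge_0.
  assert (a < - c * a) by (rewrite <- (Rmult_1_l a) at 1; apply Rmult_lt_compat_r; lra).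
  assert (a * a < (- c * a) * (- c * a)) by (apply Rmult_le_0_lt_compat; lra).
  assert (u^2 = (-c*a)*(-c*a)) by (rewrite Hu; ring).
  simpl in *. lra.
Qed.

Lemma key (r s x1 x2 x3 a b S c d : R) :
  a^2 = (x1 - 2*r)^2 + (x2 - 0)^2 + (x3 - 0)^2 ->
  b^2 = (x1 - 0)^2 + (x2 - 2*s)^2 + (x3 - 0)^2 ->
  x1 - 2*r = c*a -> x2 - 2*s = d*b -> b = S - a ->
  a * (2*S + 4*r*c + 4*s*d) = S^2 - 4*r^2 + 4*s^2 + 4*s*d*S.
Proof.
  intros Ha Hb H1 H2 HS.
  assert (E1 : x1 = 2*r + c*a) by lra.
  assert (E2 : x2 = 2*s + d*b) by lra.
  assert (H : a^2 - b^2 = 4*s^2 + 4*s*d*b - 4*r^2 - 4*r*c*a) by (rewrite Ha, Hb, E1, E2; ring).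
  rewrite HS in H. lra.
Qed.

Theorem mainTheorem1 (s r : R) (x1 x2 x3 y1 y2 y3 : R) (rho : R) :
  0 <= s -> 0 <= r -> ~ (s = 0 /\ r = 0) ->
  dist3 x1 x2 x3 (2*r) 0 0 + dist3 x1 x2 x3 0 (2*s) 0 =
    dist3 y1 y2 y3 (2*r) 0 0 + dist3 y1 y2 y3 0 (2*s) 0 ->
  (x1 - 2*r) / dist3 x1 x2 x3 (2*r) 0 0 = (y1 - 2*r) / dist3 y1 y2 y3 (2*r) 0 0 ->
  (x2 - 2*s) / dist3 x1 x2 x3 0 (2*s) 0 = (y2 - 2*s) / dist3 y1 y2 y3 0 (2*s) 0 ->
  0 <= rho ->
  cosh rho = (dist3 x1 x2 x3 0 (2*s) 0 + dist3 x1 x2 x3 (2*r) 0 0)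
               / (2 * sqrt (r^2 + s^2)) ->
  ln 6 < rho ->
  (x1 = y1 /\ x2 = y2 /\ x3 = y3) \/ (x1 = y1 /\ x2 = y2 /\ x3 = - y3).
Proof.
  intros hs hr hrs HS Hc Hd _ Hcosh Hrho.
  pose proof (cosh_big rho Hrho) as Hch.
  assert (Ha2 := sq_sqrt3 (x1 - 2*r) (x2 - 0) (x3 - 0)).
  assert (Hb2 := sq_sqrt3 (x1 - 0) (x2 - 2*s) (x3 - 0)).
  assert (Ha2' := sq_sqrt3 (y1 - 2*r) (y2 - 0) (y3 - 0)).
  assert (Hb2' := sq_sqrt3 (y1 - 0) (y2 - 2*s) (y3 - 0)).
  assert (Ha0 := sqrt_pos ((x1 - 2*r)^2 + (x2 - 0)^2 + (x3 - 0)^2)).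
  assert (Hb0 := sqrt_pos ((x1 - 0)^2 + (x2 - 2*s)^2 + (x3 - 0)^2)).
  assert (Ha0' := sqrt_pos ((y1 - 2*r)^2 + (y2 - 0)^2 + (y3 - 0)^2)).
  assert (Hb0' := sqrt_pos ((y1 - 0)^2 + (y2 - 2*s)^2 + (y3 - 0)^2)).
  assert (HD2 : sqrt (r^2+s^2) ^ 2 = r^2 + s^2).
  { rewrite pow2_sqrt; [reflexivity| nra]. }
  assert (HD0 := sqrt_pos (r^2+s^2)).
  unfold dist3 in *.
  set (a := sqrt ((x1 - 2*r)^2 + (x2 - 0)^2 + (x3 - 0)^2)) in *.
  set (b := sqrt ((x1 - 0)^2 + (x2 - 2*s)^2 + (x3 - 0)^2)) in *.
  set (a' := sqrt ((y1 - 2*r)^2 + (y2 - 0)^2 + (y3 - 0)^2)) in *.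
  set (b' := sqrt ((y1 - 0)^2 + (y2 - 2*s)^2 + (y3 - 0)^2)) in *.
  set (D := sqrt (r^2+s^2)) in *.
  clearbody a b a' b' D.
  assert (HDp : 0 < D).
  { destruct (Req_dec D 0) as [E|E]; [|lra]. exfalso. apply hrs.
    rewrite E in HD2. split; nra. }
  set (S := a + b) in *.
  assert (HSb : 6 * D < S).
  { assert (S = cosh rho * (2 * D)).
    { rewrite Hcosh. unfold S. field. lra. }
    assert (0 < D*(cosh rho - 3)) by (apply Rmult_lt_0_compat; lra).
    lra. }
  assert (Hrs : r + s <= 3/2 * D).
  { destruct (Rle_lt_dec (r+s) (3/2*D)) as [|L]; [assumption|exfalso].
    assert ((3/2*D)*(3/2*D) < (r+s)*(r+s)) by (apply Rmult_le_0_lt_compat; lra).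
    assert (0 <= (r-s)^2) by apply pow2_ge_0.
    nra. }
  assert (Hap : 0 < a).
  { destruct (Req_dec a 0) as [E|E]; [|lra]. exfalso.
    rewrite E in Ha2. replace (0^2) with 0 in Ha2 by ring. destruct (sq3_0 _ _ _ Ha2) as (?&?&?).
    assert (x1 = 2*r) by lra. assert (x2 = 0) by lra. assert (x3 = 0) by lra. subst x1 x2 x3.
    assert (b^2 = 4 * D^2) by nra.
    assert (b = 2*D) by (apply sq_eq2; assumption). unfold S in *. lra. }
  assert (Hbp : 0 < b).
  { destruct (Req_dec b 0) as [E|E]; [|lra]. exfalso.
    rewrite E in Hb2. replace (0^2) with 0 in Hb2 by ring. destruct (sq3_0 _ _ _ Hb2) as (?&?&?).
    assert (x1 = 0) by lra. assert (x2 = 2*s) by lra. assert (x3 = 0) by lra. subst x1 x2 x3.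
    assert (a^2 = 4 * D^2) by nra.
    assert (a = 2*D) by (apply sq_eq2; assumption). unfold S in *. lra. }
  assert (Hap' : 0 < a').
  { destruct (Req_dec a' 0) as [E|E]; [|lra]. exfalso.
    rewrite E in Ha2'. replace (0^2) with 0 in Ha2' by ring. destruct (sq3_0 _ _ _ Ha2') as (?&?&?).
    assert (y1 = 2*r) by lra. assert (y2 = 0) by lra. assert (y3 = 0) by lra. subst y1 y2 y3.
    assert (b'^2 = 4 * D^2) by nra.
    assert (b' = 2*D) by (apply sq_eq2; assumption). unfold S in *. lra. }
  assert (Hbp' : 0 < b').
  { destruct (Req_dec b' 0) as [E|E]; [|lra]. exfalso.
    rewrite E in Hb2'. replace (0^2) with 0 in Hb2' by ring. destruct (sq3_0 _ _ _ Hb2') as (?&?&?).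
    assert (y1 = 0) by lra. assert (y2 = 2*s) by lra. assert (y3 = 0) by lra. subst y1 y2 y3.
    assert (a'^2 = 4 * D^2) by nra.
    assert (a' = 2*D) by (apply sq_eq2; assumption). unfold S in *. lra. }
  set (c := (x1 - 2*r)/a) in *.
  set (d := (x2 - 2*s)/b) in *.
  assert (Ec : x1 - 2*r = c*a) by (unfold c; field; lra).
  assert (Ed : x2 - 2*s = d*b) by (unfold d; field; lra).
  assert (Ec' : y1 - 2*r = c*a') by (rewrite Hc; field; lra).
  assert (Ed' : y2 - 2*s = d*b') by (rewrite Hd; field; lra).
  clearbody c d.
  assert (Hc1 : -1 <= c) by (apply (coef_bound (x1-2*r) (x2-0) (x3-0) a c); assumption).
  assert (Hd1 : -1 <= d) by (apply (coef_bound (x2-2*s) (x1-0) (x3-0) b d); [assumption|assumption|rewrite Hb2; ring]).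
  assert (HK : 0 < 2*S + 4*r*c + 4*s*d).
  { assert (r*(-1) <= r*c) by (apply Rmult_le_compat_l; lra).
    assert (s*(-1) <= s*d) by (apply Rmult_le_compat_l; lra).
    lra. }
  assert (K1 := key r s x1 x2 x3 a b S c d Ha2 Hb2 Ec Ed ltac:(unfold S; ring)).
  assert (K2 := key r s y1 y2 y3 a' b' S c d Ha2' Hb2' Ec' Ed' ltac:(rewrite HS; ring)).
  assert (Eaa : a = a').
  { apply Rmult_eq_reg_r with (2*S + 4*r*c + 4*s*d); [|lra].
    rewrite K1, K2. reflexivity. }
  assert (Ebb : b = b') by (unfold S in *; lra).
  subst a' b'.
  assert (X1 : x1 = y1) by lra.
  assert (X2 : x2 = y2) by lra.
  subst y1 y2.
  assert (E3 : (x3 - y3) * (x3 + y3) = 0).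
  { assert (x3^2 = y3^2) by lra. 
    replace ((x3 - y3) * (x3 + y3)) with (x3^2 - y3^2) by ring. lra. }
  destruct (Rmult_integral _ _ E3); [left | right]; repeat split; lra.
Qed.
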